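(* Let $(D,\prec,\succ,d)$ be a differential dendriform algebra of weight zero. Define, for $a,b\in D$, $$a\searrow b:=d(a)\succ b,\quad a\nearrow b:=a\succ d(b),\quad a\swarrow b:=d(a)\prec b,\quad a\nwarrow b:=a\prec d(b).$$ Then $(D,\searrow,\nearrow,\swarrow,\nwarrow)$ is a Novikov-dendriform algebra. Moreover, with $$a\vdash b:=a\searrow b+a\swarrow b=d(a)\succ b+d(a)\prec b,\qquad a\dashv b:=a\nearrow b+a\nwarrow b=a\succ d(b)+a\prec d(b),$$ the triple $(D,\vdash,\dashv)$ is a Novikov-associative algebra.
   Context: $\mathbf{k}$ is a commutative unital ring. A dendriform algebra is a $\mathbf{k}$-module $D$ with bilinear operations $\prec,\succ$ such that for all $a,b,c\in D$: $(a\prec b)\prec c=a\prec(b\prec c+b\succ c)$, $(a\succ b)\prec c=a\succ(b\prec c)$, $(a\prec b+a\succ b)\succ c=a\succ(b\succ c)$. A derivation of weight $\lambda$ on it is a linear map $d$ with $d(a\prec b)=d(a)\prec b+a\prec d(b)+\lambda d(a)\prec d(b)$ and $d(a\succ b)=d(a)\succ b+a\succ d(b)+\lambda d(a)\succ d(b)$ for all $a,b$; then $(D,\prec,\succ,d)$ is a differential dendriform algebra of weight $\lambda$. A Novikov-dendriform algebra is a $\mathbf{k}$-module $N$ with four bilinear operations $\searrow,\nearrow,\swarrow,\nwarrow$ such that for all $a,b,c\in N$: (i) $(a\swarrow b)\nwarrow c=a\swarrow(b\nearrow c+b\nwarrow c)$; (ii) $(a\searrow b)\nwarrow c=a\searrow(b\nwarrow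 c)$; (iii) $(a\searrow b+a\swarrow b)\nearrow c=a\searrow(b\nearrow c)$; (iv) $(a\nwarrow b)\nwarrow c-a\nwarrow(b\searrow c+b\swarrow c)=a\swarrow(b\searrow c+b\swarrow c)-(a\nwarrow b)\swarrow c$; (v) $(a\nearrow b)\nwarrow c-a\nearrow(b\swarrow c)=a\searrow(b\swarrow c)-(a\nearrow b)\swarrow c$; (vi) $(a\nearrow b+a\nwarrow b)\nearrow c-a\nearrow(b\searrow c)=a\searrow(b\searrow c)-(a\nearrow b+a\nwarrow b)\searrow c$. A Novikov-associative algebra is a $\mathbf{k}$-module $A$ with bilinear operations $\vdash,\dashv$ such that for all $a,b,c$: $(a\vdash b)\dashv c=a\vdash(b\dashv c)$ and $(a\dashv b)\dashv c-a\dashv(b\vdash c)=a\vdash(b\vdash c)-(a\dashv b)\vdash c$. *)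

(* Defs.v *)
From mathcomp Require Import all_boot all_algebra.
Set Implicit Arguments. Unset Strict Implicit. Unset Printing Implicit Defensive.
Import GRing.Theory.
Local Open Scope ring_scope.

Definition bilinear_op (k : comPzRingType) (D : lmodType k) (op : D -> D -> D) : Prop :=
  (forall c a a' b, op (c *: a + a') b = c *: op a b + op a' b) /\
  (forall c a b b', op a (c *: b + b') = c *: op a b + op a b').

Definition dendriform (k : comPzRingType) (D : lmodType k) (pl pr : D -> D -> D) : Prop :=
  bilinear_op pl /\ bilinear_op pr /\
  (forall a b c, pl (pl a b) c = pl a (pl b c + pr b c)) /\
  (forall a b c, pl (pr a b) c = pr a (pl b c)) /\
  (forall a b c, pr (pl a b + pr a b) c = pr a (pr b c)).

Definition dend_derivation (k : comPzRingType) (D : lmodType k) (lam : k)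
    (pl pr : D -> D -> D) (d : {linear D -> D}) : Prop :=
  (forall a b, d (pl a b) = pl (d a) b + pl a (d b) + lam *: pl (d a) (d b)) /\
  (forall a b, d (pr a b) = pr (d a) b + pr a (d b) + lam *: pr (d a) (d b)).

Definition differential_dendriform (k : comPzRingType) (D : lmodType k) (lam : k)
    (pl pr : D -> D -> D) (d : {linear D -> D}) : Prop :=
  dendriform pl pr /\ dend_derivation lam pl pr d.

(* se = searrow, ne = nearrow, sw = swarrow, nw = nwarrow *)
Definition novikov_dendriform (k : comPzRingType) (D : lmodType k)
    (se ne sw nw : D -> D -> D) : Prop :=
  bilinear_op se /\ bilinear_op ne /\ bilinear_op sw /\ bilinear_op nw /\
  (forall a b c, nw (sw a b) c = sw a (ne b c + nw b c)) /\
  (forall a b c, nw (se a b) c = se a (nw b c)) /\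
  (forall a b c, ne (se a b + sw a b) c = se a (ne b c)) /\
  (forall a b c, nw (nw a b) c - nw a (se b c + sw b c)
                 = sw a (se b c + sw b c) - sw (nw a b) c) /\
  (forall a b c, nw (ne a b) c - ne a (sw b c) = se a (sw b c) - sw (ne a b) c) /\
  (forall a b c, ne (ne a b + nw a b) c - ne a (se b c)
                 = se a (se b c) - se (ne a b + nw a b) c).

(* vd = vdash, da = dashv *)
Definition novikov_associative (k : comPzRingType) (D : lmodType k)
    (vd da : D -> D -> D) : Prop :=
  bilinear_op vd /\ bilinear_op da /\
  (forall a b c, da (vd a b) c = vd a (da b c)) /\
  (forall a b c, da (da a b) c - da a (vd b c) = vd a (vd b c) - vd (da a b) c).

(* Main.v *)
Require Import Defs.
From mathcomp Require Import all_boot all_algebra.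
Local Open Scope ring_scope.
Import GRing.Theory.

Section S.
Variables (k : comPzRingType) (D : lmodType k) (op : D -> D -> D).
Hypothesis H : bilinear_op op.
Lemma bl0 b : op 0 b = 0.
Proof. have E := H.1 1 0 0 b; rewrite !scale1r addr0 in E.
by apply: (addrI (op 0 b)); rewrite addr0 -E. Qed.
Lemma br0 b : op b 0 = 0.
Proof. have E := H.2 1 b 0 0; rewrite !scale1r addr0 in E.
by apply: (addrI (op b 0)); rewrite addr0 -E. Qed.
Lemma blD a a' b : op (a + a') b = op a b + op a' b.
Proof. by have := H.1 1 a a' b; rewrite !scale1r. Qed.
Lemma brD a b b' : op a (b + b') = op a b + op a b'.
Proof. by have := H.2 1 a b b'; rewrite !scale1r. Qed.
Lemma blN a b : op (- a) b = - op a b.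
Proof. have := H.1 (-1) a 0 b; rewrite addr0 bl0 addr0 !scaleN1r //. Qed.
Lemma brN a b : op a (- b) = - op a b.
Proof. have := H.2 (-1) a b 0; rewrite addr0 br0 addr0 !scaleN1r //. Qed.
End S.

Ltac push t := repeat match goal with |- context [?a + t + ?b] =>
  lazymatch b with @GRing.opp _ t => fail | _ => rewrite (addrAC a t b) end
 | |- context [t + ?b] =>
  lazymatch b with @GRing.opp _ t => fail | _ => rewrite (addrC t b) end end.
Ltac canc := repeat match goal with |- context [@GRing.opp ?V ?t] => push (@GRing.opp V t); push t; rewrite ?addrK ?subrr ?addNr ?addrNK end.
Lemma zl (V : zmodType) (x : V) : 0 + x = 0 -> x = 0.
Proof. by rewrite add0r. Qed.
Ltac zsolve := apply/eqP; rewrite -subr_eq0; apply/eqP; rewrite ?opprD ?opprK ?addrA; canc; rewrite ?add0r ?subrr ?addNr //.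

Theorem proposition3p12 (k : comPzRingType) (D : lmodType k)
    (pl pr : D -> D -> D) (d : {linear D -> D}) :
  differential_dendriform 0 pl pr d ->
  novikov_dendriform (fun a b => pr (d a) b) (fun a b => pr a (d b))
                     (fun a b => pl (d a) b) (fun a b => pl a (d b)) /\
  novikov_associative (fun a b => pr (d a) b + pl (d a) b)
                      (fun a b => pr a (d b) + pl a (d b)).
Proof.
move=> [[Bl [Br [A1 [A2 A3]]]] [Dl Dr]].
have Dl' a b : d (pl a b) = pl (d a) b + pl a (d b) by rewrite Dl scale0r addr0.
have Dr' a b : d (pr a b) = pr (d a) b + pr a (d b) by rewrite Dr scale0r addr0.
have dD x y : d (x + y) = d x + d y by rewrite linearD.
have dN x : d (- x) = - d x by rewrite linearN.
have R3 a b c : pr (pl a b) c = pr a (pr b c) - pr (pr a b) c.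
  by rewrite -A3 (blD _ _ _ Br) addrK.
have lD := blD _ _ _ Bl; have rD := brD _ _ _ Bl; have lN := blN _ _ _ Bl; have rN := brN _ _ _ Bl.
have lD' := blD _ _ _ Br; have rD' := brD _ _ _ Br; have lN' := blN _ _ _ Br; have rN' := brN _ _ _ Br.
have bil (op : D -> D -> D) : bilinear_op op ->
   bilinear_op (fun a b => op (d a) b) /\ bilinear_op (fun a b => op a (d b)).
  move=> [h1 h2]; split; split=> *; rewrite ?linearP ?h1 ?h2 //.
have bils (o1 o2 : D -> D -> D) : bilinear_op o1 -> bilinear_op o2 ->
   bilinear_op (fun a b => o1 a b + o2 a b).
  move=> [h1 h2] [h3 h4]; split=> *; rewrite ?h1 ?h2 ?h3 ?h4 scalerDr;
  rewrite -!addrA; congr (_ + _); rewrite addrCA; congr (_ + _).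
have [B1 B2] := bil _ Bl; have [B3 B4] := bil _ Br.
split.
{ split; [exact B3|split;[exact B4|split;[exact B1|split;[exact B2|]]]].
  split; [|split; [|split;[|split;[|split]]]].
  all: move=> a b c;
  rewrite ?(Dl', Dr', dD, dN, lD, rD, lN, rN, lD', rD', lN', rN', A1, A2, R3, opprD, opprK, addrA).
  all: zsolve. }
split; [exact: bils|split; [exact: bils|split]].
all: move=> a b c;
  rewrite ?(Dl', Dr', dD, dN, lD, rD, lN, rN, lD', rD', lN', rN', A1, A2, R3, opprD, opprK, addrA).
all: zsolve.
Qed.
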